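(* For $\kappa$ countably infinite, the lattice $S$ is a countable bounded modular lattice.
   Context: $\mathcal{F}(\kappa)$ is the Boolean lattice of subsets $X\subseteq\kappa$ that are finite or cofinite. For sets $A,B,C$, $\mu(A,B,C)=(A\cap B)\cup(A\cap C)\cup(B\cap C)$. A triple is balanced if $A\cap B=A\cap C=B\cap C$. $S$ is the set of balanced triples $(A,B,C)\in\mathcal{F}(\kappa)^3$ with $C\setminus\mu(A,B,C)$ finite, ordered componentwise; it is a lattice with componentwise intersection as meet and join $(A,B,C)\vee(A',B',C')=(U_1\cup m,U_2\cup m,U_3\cup m)$ where $U_1=A\cup A'$, $U_2=B\cup B'$, $U_3=C\cup C'$, $m=\mu(U_1,U_2,U_3)$. *)

(* Defs.v *)
From mathcomp Require Import all_boot.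
From mathcomp Require Import boolp classical_sets cardinality.
Set Implicit Arguments. Unset Strict Implicit. Unset Printing Implicit Defensive.
Local Open Scope classical_set_scope.

(* F(kappa): finite or cofinite subsets of kappa (here kappa is the type T). *)
Definition finCof {T : Type} (X : set T) : Prop :=
  finite_set X \/ finite_set (~` X).

Definition mu {T : Type} (A B C : set T) : set T :=
  (A `&` B) `|` (A `&` C) `|` (B `&` C).

Definition balanced {T : Type} (A B C : set T) : Prop :=
  A `&` B = A `&` C /\ A `&` C = B `&` C.

Definition triple (T : Type) := (set T * set T * set T)%type.
Definition t1 {T} (t : triple T) : set T := t.1.1.
Definition t2 {T} (t : triple T) : set T := t.1.2.
Definition t3 {T} (t : triple T) : set T := t.2.

Definition S (T : Type) : set (triple T) :=
  [set t | [/\ finCof (t1 t), finCof (t2 t), finCof (t3 t),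
              balanced (t1 t) (t2 t) (t3 t) &
              finite_set (t3 t `\` mu (t1 t) (t2 t) (t3 t))]].

Definition leT {T} (t u : triple T) : Prop :=
  [/\ t1 t `<=` t1 u, t2 t `<=` t2 u & t3 t `<=` t3 u].

Definition meetT {T} (t u : triple T) : triple T :=
  (t1 t `&` t1 u, t2 t `&` t2 u, t3 t `&` t3 u).

Definition joinT {T} (t u : triple T) : triple T :=
  let U1 := t1 t `|` t1 u in
  let U2 := t2 t `|` t2 u in
  let U3 := t3 t `|` t3 u in
  let m := mu U1 U2 U3 in
  (U1 `|` m, U2 `|` m, U3 `|` m).
Arguments S T : clear implicits.

(* Main.v *)
Require Import Defs.
From mathcomp Require Import all_boot.
From mathcomp Require Import boolp classical_sets cardinality.
Local Open Scope classical_set_scope.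
Local Open Scope card_scope.
Set Implicit Arguments. Unset Strict Implicit.

Lemma bal_pt T (A B C : set T) p : balanced A B C ->
  (A p /\ B p <-> A p /\ C p) /\ (A p /\ C p <-> B p /\ C p).
Proof.
case=> E1 E2; split.
  by move: (congr1 (fun X => X p) E1) => /= ->.
by move: (congr1 (fun X => X p) E2) => /= ->.
Qed.

Section R.
Variable P : Prop.
Lemma andTP : (True /\ P) = P. Proof. by rewrite propeqE; tauto. Qed.
Lemma andPT : (P /\ True) = P. Proof. by rewrite propeqE; tauto. Qed.
Lemma andFP : (False /\ P) = False. Proof. by rewrite propeqE; tauto. Qed.
Lemma andPF : (P /\ False) = False. Proof. by rewrite propeqE; tauto. Qed.
Lemma orTP : (True \/ P) = True. Proof. by rewrite propeqE; tauto. Qed.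
Lemma orPT : (P \/ True) = True. Proof. by rewrite propeqE; tauto. Qed.
Lemma orFP : (False \/ P) = P. Proof. by rewrite propeqE; tauto. Qed.
Lemma orPF : (P \/ False) = P. Proof. by rewrite propeqE; tauto. Qed.
Lemma impTP : (True -> P) = P. Proof. by rewrite propeqE; tauto. Qed.
Lemma impFP : (False -> P) = True. Proof. by rewrite propeqE; tauto. Qed.
Lemma impPT : (P -> True) = True. Proof. by rewrite propeqE; tauto. Qed.
Lemma iffTP : (True <-> P) = P. Proof. by rewrite propeqE; tauto. Qed.
Lemma iffPT : (P <-> True) = P. Proof. by rewrite propeqE; tauto. Qed.
Lemma iffFP : (False <-> P) = ~ P. Proof. by rewrite propeqE; tauto. Qed.
Lemma iffPF : (P <-> False) = ~ P. Proof. by rewrite propeqE; tauto. Qed.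
Lemma notT : (~ True) = False. Proof. by rewrite propeqE; tauto. Qed.
Lemma notF : (~ False) = True. Proof. by rewrite propeqE; tauto. Qed.
End R.

Ltac simpTF := repeat rewrite ?andTP ?andPT ?andFP ?andPF ?orTP ?orPT ?orFP ?orPF
  ?impTP ?impFP ?impPT ?iffTP ?iffPT ?iffFP ?iffPF ?notT ?notF.

Ltac splitall := repeat match goal with
 | |- context [?X ?p] => is_var X; is_var p;
    let H := fresh in case: (pselect (X p)) => H;
      [rewrite (propT H) | rewrite (propF H)]; clear H
 end.


Ltac gen_pt p := repeat match goal with
 | H : balanced _ _ _ |- _ => move: (bal_pt p H); clear H
 | H : ?X `<=` ?Y |- _ => move: (H p); clear H
 end.

Ltac pw_fin p := gen_pt p; rewrite /mu /setU /setI /setD /setC /set0 /setT /=;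
  splitall; simpTF; exact I.
Ltac pw_fin' p := gen_pt p; unfold mu, setU, setI, setD, setC, set0, setT, t1, t2, t3; simpl;
  splitall; simpTF; exact I.

Ltac pweq := let p := fresh "p" in apply/funext => p; rewrite propeqE; pw_fin' p.
Ltac pwsub := let p := fresh "p" in move=> p; pw_fin' p.

Lemma finCofI T (X Y : set T) : finCof X -> finCof Y -> finCof (X `&` Y).
Proof.
case=> [fX|cX] [fY|cY].
- by left; apply: sub_finite_set fX => x [].
- by left; apply: sub_finite_set fX => x [].
- by left; apply: sub_finite_set fY => x [].
- by right; rewrite setCI finite_setU.
Qed.

Lemma finCofU T (X Y : set T) : finCof X -> finCof Y -> finCof (X `|` Y).
Proof.
case=> [fX|cX] [fY|cY].
- by left; rewrite finite_setU.
- by right; apply: sub_finite_set cY => x /= H Hx; apply: H; right.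
- by right; apply: sub_finite_set cX => x /= H Hx; apply: H; left.
- by right; apply: sub_finite_set cX => x /= H Hx; apply: H; left.
Qed.

Lemma finCof_mu T (X Y Z : set T) : finCof X -> finCof Y -> finCof Z ->
  finCof (mu X Y Z).
Proof.
by move=> fX fY fZ; rewrite /mu; do !apply: finCofU; apply: finCofI.
Qed.

Lemma countable_finCof T : countable [set: T] -> countable (@finCof T).
Proof.
move=> cT.
have cF : countable [set A : set T | finite_set A].
  apply: sub_countable (countable_finite_subset cT).
  by apply: subset_card_le => A fA; split.
pose f (bY : bool * set T) := if bY.1 then bY.2 else ~` bY.2.
apply: (sub_countable (B := f @` ([set: bool] `*` [set A : set T | finite_set A]))).
  apply: subset_card_le => X [fX|cX].
    by exists (true, X).
  by exists (false, ~` X) => //; rewrite /f /= setCK.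
apply: card_le_trans (card_image_le _ _) _.
by apply: countableX.
Qed.

Theorem corollary3p4 (T : Type) (hT : [set: T] #= [set: nat]) :
  (forall t u, S T t -> S T u ->
     [/\ S T (meetT t u), leT (meetT t u) t, leT (meetT t u) u &
         forall v, S T v -> leT v t -> leT v u -> leT v (meetT t u)]) /\
  (forall t u, S T t -> S T u ->
     [/\ S T (joinT t u), leT t (joinT t u), leT u (joinT t u) &
         forall v, S T v -> leT t v -> leT u v -> leT (joinT t u) v]) /\
  countable (S T) /\
  (exists bot top, [/\ S T bot, S T top &
     forall t, S T t -> leT bot t /\ leT t top]) /\
  (forall x y z, S T x -> S T y -> S T z -> leT x z ->
     joinT x (meetT y z) = meetT (joinT x y) z).
Proof.
split.
  move=> [[A B] C] [[D E] F] /= [fA fB fC bA iA] [fD fE fF bD iD].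
  rewrite /meetT /leT /t1 /t2 /t3 /=.
  split.
  - split => /=; try by apply: finCofI.
      by split; pweq.
    apply: (@sub_finite_set _ _ ((C `\` mu A B C) `|` (F `\` mu D E F))).
      by pwsub.
    by rewrite finite_setU.
  - by split; pwsub.
  - by split; pwsub.
  - move=> [[G H] K] /= _ [s1 s2 s3] [s4 s5 s6]; clear bA bD.
    by split; pwsub.
split.
  move=> [[A B] C] [[D E] F] /= [fA fB fC bA iA] [fD fE fF bD iD].
  rewrite /joinT /leT /t1 /t2 /t3 /=.
  split.
  - split => /=; try by apply: finCofU; [apply: finCofU | apply: finCof_mu; apply: finCofU].
      by split; pweq.
    apply: (@sub_finite_set _ _ ((C `\` mu A B C) `|` (F `\` mu D E F))).
      by pwsub.
    by rewrite finite_setU.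
  - by clear bA bD; split; pwsub.
  - by clear bA bD; split; pwsub.
  - move=> [[G H] K] /= [_ _ _ bG _] [s1 s2 s3] [s4 s5 s6]; clear bA bD.
    by split; pwsub.
split.
  have cT : countable [set: T] by move: hT; rewrite card_eq_le => /andP[].
  have cF := countable_finCof cT.
  apply: (sub_countable (B := (@finCof T `*` @finCof T) `*` @finCof T)).
    by apply: subset_card_le => -[[A B] C] [fA fB fC _ _].
  by apply: countableX => //; apply: countableX.
split.
  exists (set0, set0, set0), (setT, setT, setT); split.
  - split => /=; try by left; apply: finite_set0.
      by split; pweq.
    apply: (@sub_finite_set _ _ set0); last by apply: finite_set0.
    by pwsub.
  - split => /=; try by right; rewrite setCT; apply: finite_set0.
      by split; pweq.
    apply: (@sub_finite_set _ _ set0); last by apply: finite_set0.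
    by pwsub.
  - move=> [[A B] C] _; rewrite /leT /t1 /t2 /t3 /=.
    by split; split; pwsub.
move=> [[A B] C] [[D E] F] [[G H] K] /= [_ _ _ bA _] [_ _ _ bD _] [_ _ _ bG _].
rewrite /joinT /meetT /leT /t1 /t2 /t3 /= => -[s1 s2 s3].
by congr (_, _, _); pweq.
Qed.
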